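(* Suppose the budget and utility parameters of users are drawn i.i.d. from a distribution $\mathcal{D}$ such that (i) for each good $j$, $\mathbb{P}_{\mathcal{D}}(u_j>0)>0$, and (ii) $\mathbf{u}\in[\underline{\mathbf{u}},\bar{\mathbf{u}}]$ and $w\in[\underline w,\bar w]$ with $\underline u,\underline w>0$. Then the price vectors $\mathbf{p}^t$ of the revealed preference algorithm described below remain strictly positive and bounded for all users $t\in[n]$ when $\gamma=\gamma_t=\bar D/\sqrt n$ for all $t\in[n]$, for some constant $\bar D>0$; that is, there are constants $0<\underline p\le\bar p$ with $\underline p\le p_j^t\le\bar p$ for all goods $j$ and all $t$.
   Context: Online Fisher market: $m$ divisible goods, good $j$ with capacity $c_j=nd_j$, $\mathbf{d}>\mathbf{0}$; $n$ users with $(w_t,\mathbf{u}_t)$ i.i.d. from $\mathcal{D}$. Given $\mathbf{p}^t$, user $t$ consumes an optimal solution $\mathbf{x}_t$ of $\max\mathbf{u}_t^\top\mathbf{x}$ s.t. $(\mathbf{p}^t)^\top\mathbf{x}\le w_t$, $\mathbf{x}\ge\mathbf{0}$. Revealed preference algorithm: initialize $\mathbf{p}^1>\mathbf{0}$; for $t=1,\dots,n$, user $t$ consumes $\mathbf{x}_t$ at price $\mathbf{p}^t$ and $\mathbf{p}^{t+1}=\mathbf{p}^t-\gamma_t(\mathbf{d}-\mathbf{x}_t)$ (no projection). The constants $\underline p,\bar p$ do not depend on $n$ or $t$. *)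

(* Defs.v *)
From HB Require Import structures.
From mathcomp Require Import all_boot all_order all_algebra.
From mathcomp Require Import reals.
Set Implicit Arguments. Unset Strict Implicit. Unset Printing Implicit Defensive.
Import Order.TTheory GRing.Theory Num.Theory.
Local Open Scope ring_scope.

Definition budget_feasible {R : numDomainType} {m : nat}
  (p : 'I_m -> R) (w : R) (x : 'I_m -> R) : Prop :=
  (forall j, 0 <= x j) /\ \sum_(j < m) p j * x j <= w.

Definition optimal_consumption {R : numDomainType} {m : nat}
  (p : 'I_m -> R) (w : R) (u x : 'I_m -> R) : Prop :=
  budget_feasible p w x /\
  forall y, budget_feasible p w y -> \sum_(j < m) u j * y j <= \sum_(j < m) u j * x j.

(* Revealed-preference price sequence, 0-based:
   rp_price p1 gamma d x 0 = p^1 and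
   rp_price ... (k+1) = rp_price ... k - gamma (d - x k),
   where x k is the consumption of user k+1 (0-based user index k),
   i.e. rp_price ... k = p^{k+1}.  No projection. *)
Fixpoint rp_price {R : numDomainType} {m : nat} (p1 : 'I_m -> R) (gamma : R)
  (d : 'I_m -> R) (x : nat -> 'I_m -> R) (k : nat) : 'I_m -> R :=
  match k with
  | 0 => p1
  | k'.+1 => fun j => rp_price p1 gamma d x k' j - gamma * (d j - x k' j)
  end.

(* Main.v *)
Require Import Defs.
From HB Require Import structures.
From mathcomp Require Import all_boot all_order all_algebra.
From mathcomp Require Import reals.
From mathcomp Require Import ring lra.
Import Order.TTheory GRing.Theory Num.Theory.
Local Open Scope ring_scope.

Lemma sum_ind (R : numDomainType) m (a : 'I_m -> R) (l : 'I_m) (c : R) :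
  \sum_i a i * (if i == l then c else 0) = a l * c.
Proof.
rewrite (bigD1 l) //= eqxx big1 ?addr0 // => i /negbTE ->; by rewrite mulr0.
Qed.

Lemma opt_exhaust (R : realType) m (p : 'I_m -> R) w (u x : 'I_m -> R) (l : 'I_m) :
  optimal_consumption p w u x -> (forall i, 0 < p i) -> (forall i, 0 < u i) ->
  w <= \sum_i p i * x i.
Proof.
move=> [[x0 hb] hopt] hp hu.
rewrite leNgt; apply/negP => hlt.
pose del := (w - \sum_i p i * x i) / p l.
have hdel : 0 < del by rewrite /del divr_gt0 // subr_gt0.
pose y := fun i => x i + (if i == l then del else 0).
have hy : budget_feasible p w y.
  split.
    move=> i; rewrite /y; case: (i == l); have := x0 i; lra.
  rewrite /y.
  under eq_bigr => i _ do rewrite mulrDr.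
  rewrite big_split /= sum_ind /del mulrCA divff ?mulr1; last by rewrite gt_eqF.
  lra.
have := hopt y hy.
rewrite /y.
under eq_bigr => i _ do rewrite mulrDr.
rewrite big_split /= sum_ind.
have := hu l => hul.
have : 0 < u l * del by rewrite mulr_gt0.
lra.
Qed.

Lemma opt_ratio (R : realType) m (p : 'I_m -> R) w (u x : 'I_m -> R) (i l : 'I_m) :
  optimal_consumption p w u x -> (forall i, 0 < p i) -> (forall i, 0 < u i) ->
  0 < x i -> u l * p i <= u i * p l.
Proof.
move=> [[x0 hb] hopt] hp hu hxi.
rewrite leNgt; apply/negP => hlt.
have hil : i != l.
  apply/negP => /eqP E; move: hlt; rewrite E; lra.
pose y := fun k => x k + (if k == i then - x i else 0) + (if k == l then x i * p i / p l else 0).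
have hpl := hp l.
have hy : budget_feasible p w y.
  split.
    move=> k; rewrite /y; case: ifP => [/eqP ->|_].
      rewrite (negbTE hil); lra.
    have : 0 <= x i * p i / p l by rewrite divr_ge0 // ?mulr_ge0 // ltW // hp.
    have := x0 k; case: (k == l); lra.
  rewrite /y.
  under eq_bigr => k _ do rewrite !mulrDr.
  rewrite !big_split /= !sum_ind.
  have -> : p l * (x i * p i / p l) = p i * x i by field; rewrite gt_eqF.
  lra.
have := hopt y hy.
rewrite /y.
under eq_bigr => k _ do rewrite !mulrDr.
rewrite !big_split /= !sum_ind.
have : u i * x i < u l * (x i * p i / p l).
  have -> : u l * (x i * p i / p l) = u i * x i + x i * (u l * p i - u i * p l) / p l.
    by field; rewrite gt_eqF.
  rewrite ltrDl divr_gt0 // mulr_gt0 // subr_gt0 //.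
lra.
Qed.
Lemma min_cases {R : realType} (a b : R) :
  Num.min a b <= a /\ Num.min a b <= b /\ (Num.min a b = a \/ Num.min a b = b).
Proof.
rewrite minElt; case: ifP => h.
- split; [lra| split; [lra| by left]].
- move/negbT: h; rewrite -leNgt => h.
  split; [lra| split; [lra| by right]].
Qed.

Lemma min_step (R : realType) (p g d x M c : R) :
  0 <= g * x -> 0 <= g * d -> 0 <= c -> (0 < g * x -> p + c <= M) ->
  Num.min (p - g * (d - x)) M - Num.min p M >= Num.min (g * x) c - g * d.
Proof.
move=> hx hd hc himp.
have [h0|hpos] : g * x = 0 \/ 0 < g * x.
  move: hx; rewrite le_eqVlt => /orP[/eqP h|h]; [by left| by right].
- have E : p - g * (d - x) = p - g * d + g * x by ring.
  rewrite E h0.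
  have [a1 [a2 a3]] := min_cases (p - g * d + 0) M.
  have [b1 [b2 b3]] := min_cases p M.
  have [c1 [c2 c3]] := min_cases 0 c.
  case: a3 => ea; case: b3 => eb; case: c3 => ec; lra.
- have hM := himp hpos.
  have E : p - g * (d - x) = p - g * d + g * x by ring.
  rewrite E.
  have [a1 [a2 a3]] := min_cases (p - g * d + g * x) M.
  have [b1 [b2 b3]] := min_cases p M.
  have [c1 [c2 c3]] := min_cases (g * x) c.
  case: a3 => ea; case: b3 => eb; case: c3 => ec; lra.
Qed.

Lemma min_step0 (R : realType) (p g d x M : R) :
  0 <= g * x -> 0 <= g * d ->
  Num.min (p - g * (d - x)) M - Num.min p M >= - (g * d).
Proof.
move=> hx hd.
have E : p - g * (d - x) = p - g * d + g * x by ring.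
rewrite E.
have [a1 [a2 a3]] := min_cases (p - g * d + g * x) M.
have [b1 [b2 b3]] := min_cases p M.
case: a3 => ea; case: b3 => eb; lra.
Qed.

Lemma sum_min (R : realType) m (a : 'I_m -> R) (c : R) :
  (forall i, 0 <= a i) -> 0 <= c ->
  Num.min (\sum_i a i) c <= \sum_i Num.min (a i) c.
Proof.
move=> ha hc.
pose K := fun (s t : R) => 0 <= t /\ Num.min t c <= s.
suff : K (\sum_i Num.min (a i) c) (\sum_i a i) by case.
apply: (big_rec2 K).
  rewrite /K; split => //; have [c1 [c2 c3]] := min_cases 0 c; case: c3 => ec; lra.
move=> i s t _ [ht hm]; rewrite /K; split.
  have := ha i; lra.
have := ha i => hai.
have [a1 [a2 a3]] := min_cases (a i + t) c.
have [b1 [b2 b3]] := min_cases (a i) c.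
have [d1 [d2 d3]] := min_cases t c.
move: hm.
case: a3 => ea; case: b3 => eb; case: d3 => ed; lra.
Qed.
Arguments opt_exhaust {R m p w u x}.
Arguments opt_ratio {R m p w u x i l}.

Lemma term_le_sum {R : realType} {m : nat} (a : 'I_m -> R) (i : 'I_m) :
  (forall k, 0 <= a k) -> a i <= \sum_k a k.
Proof.
move=> h; rewrite (bigD1 i) //= lerDl sumr_ge0 // => k _; exact: h.
Qed.

Lemma core (R : realType) (m : nat) (d ulo uhi : 'I_m -> R) (wlo whi : R) (p1 : 'I_m -> R)
  (g K th c E Dbar plo D : R) (w : nat -> R) (u x : nat -> 'I_m -> R) :
  (forall j, 0 < d j) -> (\sum_j d j <= D) ->
  (forall j, 0 < ulo j) -> (forall i j, uhi i <= K * ulo j) ->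
  0 < wlo ->
  (forall k, wlo <= w k <= whi) -> (forall k j, ulo j <= u k j <= uhi j) ->
  0 < g -> g <= Dbar ->
  0 < th -> (forall j, th <= p1 j) -> 0 < plo -> plo <= th -> 0 < K ->
  c = K * th ->
  0 < E ->
  (E + D) * (K * th) <= wlo ->
  Dbar * (E + D) <= c ->
  D * (m%:R * (K * th + c) + Dbar * D) <= (th - plo - Dbar * D) * E ->
  forall k, (forall s, (s < k)%N -> optimal_consumption (rp_price p1 g d x s) (w s) (u s) (x s)) ->
  forall j, plo <= rp_price p1 g d x k j <= p1 j + whi / d j + Dbar * whi / plo.
Proof.
move=> hd hD hulo hK hwlo hw hu hg hgD hth hthp hplo hploth hK0 hc hE H1 H2 H3.
set P := rp_price p1 g d x.
set M := K * th + c.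
have hPS : forall s j, P s.+1 j = P s j - g * (d j - x s j) by [].
have hu0 : forall s i, 0 < u s i.
  move=> s i; have := hu s i; case/andP => h1 _; have := hulo i; lra.
have step : forall s (l : 'I_m), optimal_consumption (P s) (w s) (u s) (x s) ->
   (forall i, 0 < P s i) ->
   [/\ forall i, 0 <= x s i, wlo <= \sum_i P s i * x s i, \sum_i P s i * x s i <= whi &
       forall i l, 0 < x s i -> u s l * P s i <= u s i * P s l].
  move=> s l ho hp; split.
  - by case: ho => [[]].
  - have := opt_exhaust l ho hp (hu0 s); have := hw s; case/andP => ? ?; lra.
  - case: ho => [[_ hb] _]; have := hw s; case/andP => ? ?; lra.
  - move=> i l' hx; exact: (opt_ratio ho hp (hu0 s) hx).
elim/ltn_ind => k IH hopt j.
have pos : forall s, (s < k)%N -> forall i, 0 < P s i.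
  move=> s hs i.
  have := IH s hs (fun s' hs' => hopt s' (ltn_trans hs' hs)) i.
  case/andP => h1 _; lra.
have hdD : forall i, d i <= D.
  move=> i; have := term_le_sum d i (fun k => ltW (hd k)); lra.
apply/andP; split; last first.
  have hwhi : 0 < whi by have := hw 0%N; case/andP => ? ?; lra.
  have hB1 : 0 <= whi / d j by rewrite divr_ge0 // ltW.
  have hB2 : 0 <= Dbar * whi / plo by rewrite divr_ge0 // ?mulr_ge0 // ltW //; lra.
  case: k IH hopt pos => [|k'] IH hopt pos.
    rewrite /P /=; lra.
  have hk' : (k' < k'.+1)%N by [].
  have := IH k' hk' (fun s' hs' => hopt s' (ltn_trans hs' hk')) j.
  case/andP => hlo hhi.
  have [hx0 hsw1 hsw2 hrat] := step k' j (hopt k' hk') (pos k' hk').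
  rewrite hPS.
  have hPj := pos k' hk' j.
  have hPx : P k' j * x k' j <= whi.
    have := term_le_sum (fun i => P k' i * x k' i) j (fun i => mulr_ge0 (ltW (pos k' hk' i)) (hx0 i)); lra.
  have hxj := hx0 j.
  case: (lerP whi (P k' j * d j)) => hc1.
    have hxd : x k' j <= d j.
      have : P k' j * x k' j <= P k' j * d j by lra.
      by rewrite ler_pM2l.
    have := hd j => ?.
    have : 0 <= g * (d j - x k' j) by apply: mulr_ge0; [exact: ltW | rewrite subr_ge0].
    lra.
  have h1 : P k' j <= whi / d j.
    rewrite ler_pdivlMr //; exact: ltW.
  have h2 : x k' j <= whi / plo.
    rewrite ler_pdivlMr //.
    have : x k' j * plo <= x k' j * P k' j by rewrite ler_wpM2l.
    lra.
  have h3 : g * x k' j <= Dbar * whi / plo.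
    rewrite -mulrA; apply: ler_pM => //; lra.
  have := hd j => ?.
  have : 0 <= g * d j by rewrite mulr_ge0 // ltW.
  have := hthp j.
  lra.
pose Psi := fun s => \sum_i Num.min (P s i) M.
have hM : 0 < M by rewrite /M hc; apply: addr_gt0; apply: mulr_gt0.
have hc0 : 0 <= c by rewrite hc; apply: mulr_ge0; apply: ltW.
pose pr := fun s => (s <= k)%N && (th <= P s j).
have exP : exists s, pr s by exists 0%N; rewrite /pr; apply/andP; split; [by [] | exact: hthp].
have ubP : forall s, pr s -> (s <= k)%N by move=> s /andP[].
case: (ex_maxnP exP ubP) => s0 /andP[hs0k hths0] hmax.
case: (ltnP s0 k) => hlt; last first.
  have -> : k = s0 by apply/eqP; rewrite eqn_leq hlt hs0k.
  lra.
have psi_step0 : forall s, (s < k)%N -> Psi s.+1 - Psi s >= - (g * \sum_i d i).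
  move=> s hs.
  have [hx0 _ _ _] := step s j (hopt s hs) (pos s hs).
  rewrite /Psi -sumrB mulr_sumr -sumrN.
  apply: ler_sum => i _; rewrite hPS.
  apply: min_step0.
  - by apply: mulr_ge0; [exact: ltW | exact: hx0].
  - by apply: mulr_ge0; apply: ltW.
have psi_win : forall s, (s < k)%N -> P s j < th -> Psi s.+1 - Psi s >= g * E.
  move=> s hs hPj.
  have [hx0 hsw1 hsw2 hrat] := step s j (hopt s hs) (pos s hs).
  have hPi : forall i, 0 < x s i -> P s i <= K * th.
    move=> i hxi.
    have r := hrat i j hxi.
    have pi := pos s hs i; have pj := pos s hs j.
    have := hu s i; case/andP => ui1 ui2.
    have := hu s j; case/andP => uj1 uj2.
    have hui := hu0 s i; have huj := hulo j.
    have e1 : ulo j * P s i <= u s j * P s i by rewrite ler_wpM2r // ltW.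
    have e2 : u s i * P s j <= uhi i * th.
      apply: ler_pM => //; try apply: ltW => //; exact: ltW.
    have e3 := hK i j.
    have e4 : uhi i * th <= K * ulo j * th by rewrite ler_wpM2r // ltW.
    have : ulo j * P s i <= ulo j * (K * th).
      rewrite mulrCA mulrA; lra.
    by rewrite ler_pM2l.
  have hsumx : \sum_i P s i * x s i <= K * th * \sum_i x s i.
    rewrite mulr_sumr; apply: ler_sum => i _.
    have := hx0 i; rewrite le_eqVlt => /orP[/eqP <-|hxi].
      by rewrite !mulr0.
    apply: ler_wpM2r; [exact: ltW | exact: hPi].
  have hKth : 0 < K * th by apply: mulr_gt0.
  have hED : E + D <= \sum_i x s i.
    rewrite -(ler_pM2r hKth) [_ * (K * th)]mulrC; lra.
  have hmin : g * (E + D) <= Num.min (\sum_i g * x s i) c.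
    rewrite le_min; apply/andP; split.
      rewrite -mulr_sumr ler_wpM2l //; exact: ltW.
    have : 0 <= E + D by have := term_le_sum d j (fun k => ltW (hd k)); have := hd j; lra.
    move=> hED0.
    have : g * (E + D) <= Dbar * (E + D) by rewrite ler_wpM2r.
    lra.
  have hsm := @sum_min R m (fun i => g * x s i) c (fun i => mulr_ge0 (ltW hg) (hx0 i)) hc0.
  have hdiff : Psi s.+1 - Psi s >= \sum_i Num.min (g * x s i) c - g * \sum_i d i.
    rewrite /Psi -sumrB mulr_sumr -sumrB.
    apply: ler_sum => i _; rewrite hPS.
    apply: min_step.
    - by apply: mulr_ge0; [exact: ltW| exact: hx0].
    - by apply: mulr_ge0; apply: ltW.
    - exact: hc0.
    - move=> hgx; rewrite /M.
      have : 0 < x s i by move: hgx; rewrite pmulr_rgt0.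
      move/hPi; lra.
  have : g * \sum_i d i <= g * D by rewrite ler_wpM2l // ltW.
  lra.
have hnot : forall s, (s0 < s)%N -> (s <= k)%N -> P s j < th.
  move=> s h1 h2; rewrite ltNge; apply/negP => h.
  have := hmax s; rewrite /pr h2 h => /(_ isT).
  by rewrite leqNgt h1.
have win : forall N, (s0.+1 + N <= k)%N ->
    N%:R * (g * E) <= Psi (s0.+1 + N)%N - Psi s0.+1 /\
    P s0.+1 j - N%:R * (g * d j) <= P (s0.+1 + N)%N j.
  elim => [|N IHN] hN.
    rewrite addn0 !mul0r; split; lra.
  have hs : (s0.+1 + N < k)%N by rewrite addnS in hN.
  have [IH1 IH2] := IHN (ltnW hs).
  have hP := hnot (s0.+1 + N)%N (leq_addr _ _) (ltnW hs).
  have h1 := psi_win _ hs hP.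
  have [hx0 _ _ _] := step _ j (hopt _ hs) (pos _ hs).
  have -> : N.+1%:R = N%:R + 1 :> R by rewrite mulrSr.
  rewrite addnS (hPS (s0.+1 + N)%N) !mulrDl !mul1r.
  have := hx0 j => hxj.
  have : 0 <= g * x (s0.+1 + N)%N j by apply: mulr_ge0 => //; exact: ltW.
  have -> : g * (d j - x (s0.+1 + N)%N j) = g * d j - g * x (s0.+1 + N)%N j by ring.
  split; lra.
pose N := (k - s0.+1)%N.
have hk : (s0.+1 + N)%N = k by rewrite /N subnKC.
have [W1 W2] := win N ltac:(by rewrite hk).
rewrite hk in W1 W2.
have hPsik : Psi k <= m%:R * M.
  rewrite /Psi.
  have : \sum_i Num.min (P k i) M <= \sum_(i < m) M.
    by apply: ler_sum => i _; have [_ [h _]] := min_cases (P k i) M.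
  by rewrite sumr_const card_ord mulr_natl.
have hPsi0 : 0 <= Psi s0.
  apply: sumr_ge0 => i _; rewrite le_min; apply/andP; split; apply: ltW => //.
  exact: pos.
have hst := psi_step0 s0 hlt.
have [hx0 _ _ _] := step _ j (hopt _ hlt) (pos _ hlt).
have hgd : g * \sum_i d i <= g * D by rewrite ler_wpM2l // ltW.
have hP1 : th - g * d j <= P s0.+1 j.
  rewrite hPS.
  have : 0 <= g * x s0 j by apply: mulr_ge0; [exact: ltW | exact: hx0].
  have -> : g * (d j - x s0 j) = g * d j - g * x s0 j by ring.
  lra.
have ha : 0 <= N%:R * g by apply: mulr_ge0 => //; exact: ltW.
have hA : N%:R * g * E <= m%:R * M + g * D.
  rewrite -mulrA; lra.
have hDbar : g * D <= Dbar * D.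
  rewrite ler_wpM2r //; have := hdD j; have := hd j; lra.
have hD0 : 0 <= D by have := hdD j; have := hd j; lra.
have hB : (N%:R * g * D) * E <= (th - plo - Dbar * D) * E.
  have -> : N%:R * g * D * E = D * (N%:R * g * E) by ring.
  have : D * (N%:R * g * E) <= D * (m%:R * M + g * D) by rewrite ler_wpM2l.
  have : D * (m%:R * M + g * D) <= D * (m%:R * M + Dbar * D).
    by rewrite ler_wpM2l // lerD2l.
  rewrite /M in H3 *; lra.
rewrite ler_pM2r // in hB.
have e1 : g * d j <= Dbar * D.
  apply: ler_pM; [exact: ltW | exact: ltW (hd j) | exact: hgD | exact: hdD].
have e2 : N%:R * g * d j <= N%:R * g * D by rewrite ler_wpM2l // hdD.
have e3 : N%:R * (g * d j) = N%:R * g * d j by rewrite mulrA.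
lra.
Qed.
Lemma consts (R : realType) (mr K D a th Dbar E : R) :
  0 <= mr -> 1 <= K -> 0 < D -> 0 < a -> 0 < th -> 0 < Dbar ->
  16 * (mr + 1) * (K * K) * D * th <= a ->
  4 * D * Dbar <= th ->
  8 * K * (D * D) * Dbar <= a ->
  a * Dbar <= (K * th) * (K * th) ->
  2 * (K * th) * E = a ->
  [/\ (E + D) * (K * th) <= a,
      Dbar * (E + D) <= K * th &
      D * (mr * (K * th + K * th) + Dbar * D) <= (th - th / 4 - Dbar * D) * E].
Proof.
move=> hm hK hD ha hth hDb f1 f2 f3 f4 fE.
have hKth : 0 < K * th by apply: mulr_gt0 => //; lra.
have hE : 0 < E.
  have : 0 < 2 * (K * th) * E by lra.
  by rewrite pmulr_rgt0 // mulr_gt0.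
have g1 : D * (K * th) <= a / 2.
  have e : D * (K * th) <= D * (K * th) * (8 * (mr + 1) * K).
    have h0 : 0 <= D * (K * th) by apply: mulr_ge0; lra.
    have h1 : 0 <= 8 * (mr + 1) * K - 1 by nra.
    have := mulr_ge0 h0 h1; rewrite mulrBr mulr1; lra.
  have e2 : D * (K * th) * (8 * (mr + 1) * K) = (16 * (mr + 1) * (K * K) * D * th) / 2 by field.
  lra.
split.
- have -> : (E + D) * (K * th) = (2 * (K * th) * E) / 2 + D * (K * th) by field.
  lra.
- rewrite -(ler_pM2r (_ : 0 < 2 * (K * th))); last lra.
  have -> : Dbar * (E + D) * (2 * (K * th)) = Dbar * (2 * (K * th) * E) + Dbar * (2 * (D * (K * th))) by ring.
  rewrite fE.
  have : Dbar * (2 * (D * (K * th))) <= Dbar * a by rewrite ler_wpM2l ?(ltW hDb) //; lra.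
  have -> : K * th * (2 * (K * th)) = 2 * ((K * th) * (K * th)) by ring.
  lra.
- have hK0 : 0 < K by lra.
  rewrite -(ler_pM2l hK0).
  have r1 : K * ((th - th / 4 - Dbar * D) * E) >= a / 4.
    have : th / 2 <= th - th / 4 - Dbar * D by lra.
    move=> h.
    have : th / 2 * E <= (th - th / 4 - Dbar * D) * E by rewrite ler_wpM2r ?(ltW hE).
    have -> : a / 4 = K * (th / 2 * E) by rewrite -fE; field.
    move=> h2; rewrite ler_wpM2l //; lra.
  have l1 : K * (D * (mr * (K * th + K * th))) <= a / 8.
    have -> : K * (D * (mr * (K * th + K * th))) = (16 * mr * (K * K) * D * th) / 8 by field.
    have : 16 * mr * (K * K) * D * th <= 16 * (mr + 1) * (K * K) * D * th.
      have h0 : 0 <= (K * K) * D * th by apply: mulr_ge0; [apply: mulr_ge0; [apply: mulr_ge0|]|]; lra.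
      have -> : 16 * (mr + 1) * (K * K) * D * th = 16 * mr * (K * K) * D * th + 16 * ((K * K) * D * th) by ring.
      lra.
    lra.
  have l2 : K * (D * (Dbar * D)) <= a / 8.
    have -> : K * (D * (Dbar * D)) = (8 * K * (D * D) * Dbar) / 8 by field.
    lra.
  have -> : K * (D * (mr * (K * th + K * th) + Dbar * D)) = K * (D * (mr * (K * th + K * th))) + K * (D * (Dbar * D)) by ring.
  lra.
Qed.

Theorem lemma7 (R : realType) (m : nat) (d : 'I_m -> R)
  (ulo uhi : 'I_m -> R) (wlo whi : R) (p1 : 'I_m -> R) :
  (forall j, 0 < d j) ->
  (forall j, 0 < ulo j) -> (forall j, ulo j <= uhi j) ->
  0 < wlo -> wlo <= whi ->
  (forall j, 0 < p1 j) ->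
  exists Dbar : R, 0 < Dbar /\
  exists plo phi : R, 0 < plo /\ plo <= phi /\
  forall (n : nat) (w : nat -> R) (u x : nat -> 'I_m -> R),
    (0 < n)%N ->
    (forall k, wlo <= w k <= whi) ->
    (forall k j, ulo j <= u k j <= uhi j) ->
    forall k : nat, (k < n)%N ->
      (forall s : nat, (s < k)%N ->
         optimal_consumption (rp_price p1 (Dbar / Num.sqrt n%:R) d x s)
                             (w s) (u s) (x s)) ->
      forall j, plo <= rp_price p1 (Dbar / Num.sqrt n%:R) d x k j <= phi.
Proof.
move=> hd hulo hle hwlo hww hp1.
have hsd : 0 <= \sum_j d j by apply: sumr_ge0 => i _; exact: ltW.
set D := 1 + \sum_j d j.
have hD0 : 0 < D by rewrite /D; lra.
set A := \sum_j uhi j.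
set Bi := \sum_j (ulo j)^-1.
have huhi : forall i, 0 < uhi i by move=> i; have := hle i; have := hulo i; lra.
have hA : forall i, uhi i <= A by move=> i; apply: term_le_sum => k; exact: ltW.
have hBi : forall i, (ulo i)^-1 <= Bi.
  by move=> i; apply: term_le_sum => k; rewrite invr_ge0; exact: ltW.
have hA0 : 0 <= A by apply: sumr_ge0 => i _; exact: ltW.
have hBi0 : 0 <= Bi by apply: sumr_ge0 => i _; rewrite invr_ge0; exact: ltW.
set K := 1 + A * Bi.
have hK1 : 1 <= K by rewrite /K; have := mulr_ge0 hA0 hBi0; lra.
have hK0 : 0 < K by lra.
have hK : forall i j, uhi i <= K * ulo j.
  move=> i j.
  have e1 : uhi i * (ulo j)^-1 <= A * Bi.
    apply: ler_pM; [exact: ltW | by rewrite invr_ge0 ltW | exact: hA | exact: hBi].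
  have e2 : uhi i = uhi i * (ulo j)^-1 * ulo j by rewrite mulfVK // gt_eqF.
  have e3 : uhi i * (ulo j)^-1 * ulo j <= A * Bi * ulo j by rewrite ler_wpM2r // ltW.
  rewrite /K mulrDl mul1r; have := hulo j; lra.
set S := \sum_j (p1 j)^-1.
have hS0 : 0 <= S by apply: sumr_ge0 => i _; rewrite invr_ge0; exact: ltW.
set P0 := (1 + S)^-1.
have hP0 : 0 < P0 by rewrite invr_gt0; lra.
have hP0p : forall j, P0 <= p1 j.
  move=> j; rewrite /P0 -div1r ler_pdivrMr; last lra.
  have e1 : (p1 j)^-1 <= S by apply: term_le_sum => k; rewrite invr_ge0; exact: ltW.
  have e2 : p1 j * (p1 j)^-1 = 1 by rewrite mulfV // gt_eqF.
  have e3 : p1 j * (p1 j)^-1 <= p1 j * S by rewrite ler_wpM2l // ltW.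
  have := hp1 j; nra.
set Q := wlo / (16 * (m%:R + 1) * (K * K) * D).
have hm0 : 0 <= m%:R :> R by [].
have hQden : 0 < 16 * (m%:R + 1) * (K * K) * D.
  apply: mulr_gt0 => //; apply: mulr_gt0; [apply: mulr_gt0 => //; lra | apply: mulr_gt0 => //].
have hQ : 0 < Q by apply: divr_gt0.
set th := Num.min P0 Q.
have hth : 0 < th by rewrite lt_min hP0 hQ.
have hthP0 : th <= P0 by rewrite ge_min lexx.
have hthQ : th <= Q by rewrite ge_min lexx orbT.
have hKth : 0 < K * th by apply: mulr_gt0.
set Dbar := Num.min (th / (4 * D)) (Num.min (wlo / (8 * K * (D * D))) ((K * th) * (K * th) / wlo)).
have hDb1 : Dbar <= th / (4 * D) by rewrite ge_min lexx.
have hDb2 : Dbar <= wlo / (8 * K * (D * D)) by rewrite ge_min ge_min lexx orbT.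
have hDb3 : Dbar <= (K * th) * (K * th) / wlo by rewrite ge_min ge_min lexx !orbT.
have hDb : 0 < Dbar.
  rewrite lt_min lt_min; apply/and3P; split.
  - apply: divr_gt0 => //; lra.
  - apply: divr_gt0 => //; apply: mulr_gt0; [apply: mulr_gt0 => //| apply: mulr_gt0 => //].
  - by apply: divr_gt0 => //; apply: mulr_gt0.
set plo := th / 4.
have hplo : 0 < plo by rewrite /plo; lra.
have hwhi : 0 < whi by lra.
set B := fun j => p1 j + whi / d j + Dbar * whi / plo.
have hB0 : forall j, 0 <= B j.
  move=> j; rewrite /B.
  have := hp1 j.
  have : 0 <= whi / d j by rewrite divr_ge0 // ltW.
  have : 0 <= Dbar * whi / plo by apply: divr_ge0; [apply: mulr_ge0; apply: ltW | apply: ltW].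
  lra.
have hsB : 0 <= \sum_j B j by apply: sumr_ge0 => i _; exact: hB0.
exists Dbar; split => //.
exists plo, (plo + \sum_j B j); split => //; split; first lra.
move=> n w u x hn hw hu k hk hopt j.
set g := Dbar / Num.sqrt n%:R.
have hsq : 1 <= Num.sqrt (n%:R : R).
  have h1 : (1 : R) <= n%:R by rewrite ler1n.
  have := h1; rewrite -(ler_sqrt (1 : R)) ?sqrtr1 //; exact: ler0n.
have hg : 0 < g by rewrite /g divr_gt0 //; lra.
have hgD : g <= Dbar.
  rewrite /g ler_pdivrMr; last lra.
  have := ler_wpM2l (ltW hDb) hsq; rewrite mulr1 => ->; done.
have f1 : 16 * (m%:R + 1) * (K * K) * D * th <= wlo.
  by move: hthQ; rewrite /Q ler_pdivlMr // mulrC.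
have f2 : 4 * D * Dbar <= th.
  move: hDb1; rewrite ler_pdivlMr; last lra.
  by rewrite mulrC.
have f3 : 8 * K * (D * D) * Dbar <= wlo.
  move: hDb2; rewrite ler_pdivlMr; first by rewrite mulrC.
  by apply: mulr_gt0; [apply: mulr_gt0 => //| apply: mulr_gt0 => //].
have f4 : wlo * Dbar <= (K * th) * (K * th).
  by move: hDb3; rewrite ler_pdivlMr // mulrC.
set E := wlo / (2 * (K * th)).
have fE : 2 * (K * th) * E = wlo by rewrite /E mulrC divfK // gt_eqF // mulr_gt0.
have [H1 H2 H3] := @consts R m%:R K D wlo th Dbar E hm0 hK1 hD0 hwlo hth hDb f1 f2 f3 f4 fE.
have hE : 0 < E by rewrite /E divr_gt0 //; lra.
have hthp : forall j, th <= p1 j by move=> i; have := hP0p i; lra.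
have hDs : \sum_j d j <= D by rewrite /D; lra.
have := @core R m d ulo uhi wlo whi p1 g K th (K * th) E Dbar plo D w u x
  hd hDs hulo hK hwlo hw hu hg hgD hth hthp hplo ltac:(rewrite /plo; lra) hK0 erefl hE H1 H2
  ltac:(rewrite /plo; exact: H3) k hopt j.
case/andP => l1 l2; apply/andP; split => //.
have := term_le_sum B j hB0; rewrite /B in l2 *; lra.
Qed.
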